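(* Let $G$ be a connected graph and $\varphi$ a $\mathbb{T}$-gain on $G$ such that $\varphi(\overrightarrow{E}(G))\subseteq\{a+ib\in\mathbb{T}:a\ge0\}$. Then $\lambda_1(A(\Phi))\le\rho(A(\Phi))\le3\lambda_1(A(\Phi))$, where $\Phi=(G,\varphi)$.
   Context: Graphs are finite, simple and undirected. $\mathbb{T}=\{z\in\mathbb{C}:|z|=1\}$. $\overrightarrow{E}(G)$ is the set of oriented edges ($\overrightarrow{e_{st}}$ and $\overrightarrow{e_{ts}}$ for each edge $e_{st}$). A $\mathbb{T}$-gain on $G$ is a map $\varphi:\overrightarrow{E}(G)\to\mathbb{T}$ with $\varphi(\overrightarrow{e_{ts}})=\varphi(\overrightarrow{e_{st}})^{-1}$. $A(\Phi)$ is the Hermitian matrix with $(s,t)$ entry $\varphi(\overrightarrow{e_{st}})$ if $v_s\sim v_t$, else $0$. $\lambda_1$ denotes the largest eigenvalue and $\rho$ the spectral radius. *)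

(* Defs.v *)
(* Complex scalars: an arbitrary numClosedFieldType C
   (e.g. the complex numbers R[i] over a real closed field). *)
From mathcomp Require Import all_boot all_order all_algebra.
Set Implicit Arguments. Unset Strict Implicit. Unset Printing Implicit Defensive.
Import Order.TTheory GRing.Theory Num.Theory.
Local Open Scope ring_scope.

Definition simple_graph n (e : rel 'I_n) : Prop :=
  (forall s t, e s t = e t s) /\ (forall s, ~~ e s s).

Definition connected_graph n (e : rel 'I_n) : Prop :=
  (0 < n)%N /\ forall s t, connect e s t.

(* A T-gain: on each oriented edge (s,t) a unit complex number,
   with phi(t,s) = phi(s,t)^-1. Values off edges are irrelevant. *)
Definition T_gain (C : numClosedFieldType) n (e : rel 'I_n) (phi : 'I_n -> 'I_n -> C) : Prop :=
  forall s t, e s t -> `|phi s t| = 1 /\ phi t s = (phi s t)^-1.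

Definition gain_adj (C : numClosedFieldType) n (e : rel 'I_n) (phi : 'I_n -> 'I_n -> C)
  : 'M[C]_n := \matrix_(s, t) (if e s t then phi s t else 0).

Definition is_lambda1 (C : numClosedFieldType) n (A : 'M[C]_n) (l : C) : Prop :=
  eigenvalue A l /\ forall m, eigenvalue A m -> m <= l.

Definition is_spectral_radius (C : numClosedFieldType) n (A : 'M[C]_n) (r : C) : Prop :=
  (exists2 m, eigenvalue A m & `|m| = r) /\ forall m, eigenvalue A m -> `|m| <= r.

(* Main.v *)
Require Import Defs.
From mathcomp Require Import all_boot all_order all_algebra.
From mathcomp Require Import sesquilinear spectral.
From mathcomp Require Import ring.
Import Order.TTheory GRing.Theory Num.Theory Num.Def.
Local Open Scope ring_scope.
Local Open Scope sesquilinear_scope.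
Lemma exists_max (C : numDomainType) n (f : 'I_n -> C) : (0 < n)%N ->
  (forall i, f i \is Num.real) -> exists i, forall j, f j <= f i.
Proof.
move=> n0 fR.
suff [i Hi] : exists i, forall j, j \in enum 'I_n -> f j <= f i.
  by exists i => j; apply: Hi; rewrite mem_enum.
elim: (enum 'I_n) => [|a s [i Hi]]; first by exists (Ordinal n0).
have [hai|hia] := boolP (f a <= f i).
  exists i => j; rewrite inE => /orP[/eqP->//|]; exact: Hi.
have hia' : f i <= f a.
  by case/orP: (real_leVge (fR a) (fR i)) => h //; rewrite h in hia.
exists a => j; rewrite inE => /orP[/eqP->//|js].
exact: le_trans (Hi j js) hia'.
Qed.

Section Herm.
Variables (C : numClosedFieldType) (n : nat) (A : 'M[C]_n).
Hypothesis Aherm : A \is hermsymmx.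
Let P := spectralmx A.
Let d := spectral_diag A.

Lemma PPt : P *m P^t* = 1%:M.
Proof. exact/unitarymxP/spectral_unitarymx. Qed.

Lemma PtP : P^t* *m P = 1%:M.
Proof. by rewrite -invmx_unitary ?spectral_unitarymx // mulVmx // spectral_unit. Qed.

Lemma A_decomp : A = P^t* *m diag_mx d *m P.
Proof.
rewrite -invmx_unitary ?spectral_unitarymx //.
exact/orthomx_spectralP/hermitian_normalmx.
Qed.

Lemma d_real j : d 0 j \is Num.real.
Proof. by have /mxOverP := hermitian_spectral_diag_real Aherm; apply. Qed.

Lemma Pfree : row_free P.
Proof. by rewrite row_free_unit spectral_unit. Qed.

Lemma Ptfree : row_free (P^t*).
Proof. by rewrite row_free_unit -invmx_unitary ?spectral_unitarymx // unitmx_inv spectral_unit. Qed.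

Lemma eig_d j : eigenvalue A (d 0 j).
Proof.
apply/eigenvalueP; exists (delta_mx 0 j *m P).
  rewrite [in LHS]A_decomp !mulmxA -[_ *m P *m _]mulmxA PPt mulmx1.
  by rewrite -[_ *m diag_mx d]rowE row_diag_mx -scalemxAl.
rewrite mulmx_free_eq0 ?Pfree //; apply/eqP => /matrixP/(_ 0 j).
by rewrite !mxE !eqxx /= => /eqP; rewrite oner_eq0.
Qed.

Lemma eig_inv a : eigenvalue A a -> exists j, a = d 0 j.
Proof.
case/eigenvalueP => v eqv vn0.
have eqw : (v *m P^t*) *m diag_mx d = a *: (v *m P^t*).
  move: eqv; rewrite A_decomp => /(congr1 (fun X => X *m (P^t*))).
  by rewrite -!mulmxA PPt mulmx1 -scalemxAl !mulmxA.
have : v *m P^t* != 0 by rewrite mulmx_free_eq0 ?Ptfree.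
case/matrix0Pn => i [j wij]; exists j.
move/matrixP: eqw => /(_ i j); rewrite mul_mx_diag mxE [in X in _ = X]mxE => /eqP.
rewrite mulrC -subr_eq0 -mulrBl mulf_eq0 (negPf wij) orbF subr_eq0.
by move/eqP.
Qed.

Lemma rayleigh l : (forall j, d 0 j <= l) ->
  forall v : 'rV_n, (v *m A *m v^t*) 0 0 <= l * (v *m v^t*) 0 0.
Proof.
move=> dl v; set w := v *m P^t*.
have vw : v = w *m P by rewrite /w -mulmxA PtP mulmx1.
have -> : (v *m v^t*) = w *m w^t*.
  by rewrite vw trmx_mul map_mxM mulmxA -[_ *m P *m _]mulmxA PPt mulmx1.
rewrite A_decomp vw.
have -> : w *m P *m (P^t* *m diag_mx d *m P) *m (w *m P)^t* = w *m diag_mx d *m w^t*.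
  rewrite trmx_mul map_mxM !mulmxA -[w *m P *m _]mulmxA PPt mulmx1.
  by rewrite -(mulmxA _ P) PPt mulmx1.
rewrite !mxE mulr_sumr; apply: ler_sum => j _.
rewrite mul_mx_diag !mxE; set z := (\sum_(_ < _) _).
rewrite mulrAC [l * _]mulrC; apply: ler_wpM2l; [exact: mul_conjC_ge0 | exact: dl].
Qed.

End Herm.
Section Q.
Variables (C : numClosedFieldType) (n : nat) (A : 'M[C]_n).

Lemma Qexp (v : 'rV[C]_n) :
  (v *m A *m v^t*) 0 0 = \sum_s \sum_t v 0 s * A s t * (v 0 t)^*.
Proof.
rewrite mxE exchange_big; apply: eq_bigr => t _.
by rewrite !mxE big_distrl; apply: eq_bigr => s _; rewrite ?mxE.
Qed.

Lemma Nexp (v : 'rV[C]_n) : (v *m v^t*) 0 0 = \sum_s v 0 s * (v 0 s)^*.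
Proof. by rewrite mxE; apply: eq_bigr => s _; rewrite !mxE. Qed.

Lemma Npos (v : 'rV[C]_n) : v != 0 -> 0 < (v *m v^t*) 0 0.
Proof.
move=> vn0; rewrite Nexp lt_def sumr_ge0 ?andbT => [|s _]; last exact: mul_conjC_ge0.
apply/eqP => /psumr_eq0P H; case/matrix0Pn: vn0 => i [j].
rewrite (ord1 i) -mul_conjC_eq0 H //= => [|k _]; first by rewrite eqxx.
exact: mul_conjC_ge0.
Qed.

Hypothesis Ah : forall s t, A t s = (A s t)^*.
Hypothesis Are : forall s t, 0 <= A s t + (A s t)^*.

Lemma key (x : 'rV[C]_n) :
  0 <= (x *m A *m x^t*) 0 0 + (map_mx conjC x *m A *m (map_mx conjC x)^t*) 0 0
       + 2%:R * (map_mx (fun z => `|z|) x *m A *m (map_mx (fun z => `|z|) x)^t*) 0 0.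
Proof.
pose c s t := x 0 s * (x 0 t)^* + (x 0 s)^* * x 0 t + 2%:R * (`|x 0 s| * `|x 0 t|).
have -> : (x *m A *m x^t*) 0 0 + (map_mx conjC x *m A *m (map_mx conjC x)^t*) 0 0
       + 2%:R * (map_mx (fun z => `|z|) x *m A *m (map_mx (fun z => `|z|) x)^t*) 0 0
     = \sum_s \sum_t A s t * c s t.
  rewrite !Qexp mulr_sumr -!big_split; apply: eq_bigr => s _.
  rewrite mulr_sumr -!big_split; apply: eq_bigr => t _.
  rewrite !mxE conjCK conj_normC; change (x 0 s * A s t * (x 0 t)^* + (x 0 s)^* * A s t * x 0 t + 2%:R * (`|x 0 s| * A s t * `|x 0 t|) = A s t * c s t); rewrite /c; ring.
have cge0 s t : 0 <= c s t.
  have -> : c s t = 2%:R * ('Re (x 0 s * (x 0 t)^*) + `|x 0 s * (x 0 t)^*|).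
    rewrite ReE normrM norm_conjC /c [conjC (_ * _)]rmorphM /= conjCK.
    by field.
  apply: mulr_ge0; first by rewrite ler0n.
  rewrite addrC -[X in _ + X]opprK subr_ge0 -raddfN /= -normrN.
  exact: (leif_Re_Creal (- _)).
have csym s t : c t s = c s t by rewrite /c; ring.
rewrite -(pmulr_rge0 _ (ltr0n _ 2)) mulr2n mulrDl mul1r.
rewrite [X in _ + X]exchange_big /= -big_split; apply: sumr_ge0 => s _.
rewrite -big_split; apply: sumr_ge0 => t _ /=.
by rewrite (Ah s t) csym -mulrDl; apply: mulr_ge0.
Qed.

End Q.

Theorem theorem5p1 (C : numClosedFieldType) (n : nat) (e : rel 'I_n)
    (phi : 'I_n -> 'I_n -> C) :
  simple_graph e -> connected_graph e -> T_gain e phi ->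
  (forall s t, e s t -> 0 <= 'Re (phi s t)) ->
  exists l1, is_lambda1 (gain_adj e phi) l1 /\
  exists r, is_spectral_radius (gain_adj e phi) r /\ l1 <= r <= 3 * l1.
Proof.
move=> [esym eirr] [n0 _] Tg Hre.
set A := gain_adj e phi.
have Ah : forall s t, A t s = (A s t)^*.
  move=> s t; rewrite !mxE esym; case: ifP => est; last by rewrite conjC0.
  have [h1 ->] := Tg s t est.
  by rewrite invC_norm h1 expr1n invr1 mul1r.
have Are : forall s t, 0 <= A s t + (A s t)^*.
  move=> s t; rewrite !mxE; case: ifP => est; last by rewrite conjC0 addr0.
  by have := Hre s t est; rewrite ReE pmulr_lge0 // invr_gt0 ltr0n.
have Aherm : A \is hermsymmx.
  apply/is_hermitianmxP; rewrite expr0 scale1r; apply/matrixP => i j.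
  by move: (Ah j i); rewrite !mxE.
have [i1 Hi1] := @exists_max _ _ (fun j => spectral_diag A 0 j) n0 ((d_real _ _ _ Aherm)).
have [i2 Hi2] := @exists_max _ _ (fun j => `|spectral_diag A 0 j|) n0 (fun j => normr_real _).
exists (spectral_diag A 0 i1); split.
  split; first exact: (eig_d _ _ _ Aherm).
  by move=> m /((eig_inv _ _ _ Aherm)) [j ->]; exact: Hi1.
exists `|spectral_diag A 0 i2|; split.
  split; first by exists (spectral_diag A 0 i2); [exact: eig_d|].
  by move=> m /((eig_inv _ _ _ Aherm)) [j ->]; exact: Hi2.
have l1R := (d_real _ _ _ Aherm) i1; have mR := (d_real _ _ _ Aherm) i2.
apply/andP; split.
  exact: le_trans (real_ler_norm l1R) (Hi2 i1).
have Hi1' : forall j, spectral_diag A 0 j <= spectral_diag A 0 i1 by [].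
have ml := Hi1 i2.
set l1 := spectral_diag A 0 i1 in Hi1' ml l1R *.
set m := spectral_diag A 0 i2 in ml mR *.
case: (boolP (0 <= m)) => hm.
  rewrite ger0_norm //; apply: le_trans (ml) _.
  rewrite -subr_ge0 -[X in _ - X]mul1r -mulrBl; apply: mulr_ge0.
    by rewrite subr_ge0 ler1n.
  exact: le_trans hm ml.
have mneg : m < 0 by rewrite real_ltNge.
rewrite ltr0_norm //.
have := (eig_d _ _ _ Aherm) i2; case/eigenvalueP => x xA xn0.
have K := key _ _ _ Ah Are x.
have Qx : (x *m A *m x^t*) 0 0 = m * (x *m x^t*) 0 0.
  by rewrite xA -scalemxAl mxE.
have R1 := (rayleigh _ _ _ Aherm l1) Hi1' (map_mx conjC x).
have R2 := (rayleigh _ _ _ Aherm l1) Hi1' (map_mx (fun z => `|z|) x).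
have N1 : (map_mx conjC x *m (map_mx conjC x)^t*) 0 0 = (x *m x^t*) 0 0.
  rewrite !Nexp; apply: eq_bigr => s _; rewrite !mxE conjCK mulrC //.
have N2 : (map_mx (fun z => `|z|) x *m (map_mx (fun z => `|z|) x)^t*) 0 0 = (x *m x^t*) 0 0.
  rewrite !Nexp; apply: eq_bigr => s _; rewrite !mxE conj_normC -expr2 normCK //.
rewrite N1 in R1; rewrite N2 in R2; rewrite Qx in K.
have Npos' := Npos _ _ _ xn0.
have : 0 <= (m + 3%:R * l1) * (x *m x^t*) 0 0.
  apply: (le_trans K).
  have -> : (m + 3%:R * l1) * (x *m x^t*) 0 0 =
     m * (x *m x^t*) 0 0 + l1 * (x *m x^t*) 0 0 + 2%:R * (l1 * (x *m x^t*) 0 0) by ring.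
  apply: lerD; first exact: lerD.
  by apply: ler_wpM2l; first by rewrite ler0n.
rewrite pmulr_lge0 // => H.
by rewrite -subr_ge0 opprK addrC.
Qed.
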